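(* Let $n$ and $b$ be integers with $1\le b<\frac{n}{2}-1$, and let $BT\in\mathcal{CT}^*_{n,b}$. Then \[ M_1(BT)\le\begin{cases}2(2n+3b-3) & \text{if } 1\le b<\frac{n-2}{3},\\ 2(4n-3b-7) & \text{if } \frac{n-2}{3}\le b<\frac{n}{2}-1.\end{cases} \] For $1\le b<\frac{n-2}{3}$, equality holds if and only if $BT$ has degree sequence consisting of $b$ entries $4$, $n-3b-2$ entries $2$ and $2b+2$ entries $1$. For $\frac{n-2}{3}\le b<\frac{n}{2}-1$, equality holds if and only if $BT$ has degree sequence consisting of $n-2b-2$ entries $4$, $3b-n+2$ entries $3$ and $n-b$ entries $1$.
   Context: A chemical tree is a tree with maximum degree at most $4$. A branching vertex is a vertex of degree greater than $2$. $\mathcal{CT}^*_{n,b}$ denotes the class of all $n$-vertex chemical trees with exactly $b$ branching vertices. The first Zagreb index is $M_1(G)=\sum_{v\in V(G)}d_v^2$, where $d_v$ is the degree of $v$. *)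

(* Defs.v *)
From mathcomp Require Import all_boot.
Set Implicit Arguments. Unset Strict Implicit. Unset Printing Implicit Defensive.

Section Graphs.
Variable n : nat.
Variable e : rel 'I_n.

Definition simple_graph : Prop := symmetric e /\ irreflexive e.

Definition deg (v : 'I_n) : nat := #|[set u | e v u]|.

Definition connected_graph : Prop := forall u v : 'I_n, connect e u v.

Definition acyclic_graph : Prop :=
  forall s : seq 'I_n, uniq s -> 2 < size s -> ~~ cycle e s.

Definition is_tree : Prop := simple_graph /\ connected_graph /\ acyclic_graph.

Definition chemical_tree : Prop := is_tree /\ forall v, deg v <= 4.

Definition n_branching : nat := #|[set v | 2 < deg v]|.

Definition n_deg (k : nat) : nat := #|[set v | deg v == k]|.

Definition M1 : nat := \sum_(v < n) deg v ^ 2.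
End Graphs.

(* Main.v *)
Require Import Defs.
From mathcomp Require Import all_boot zify.
Set Implicit Arguments. Unset Strict Implicit. Unset Printing Implicit Defensive.

Section G.
Variable n : nat.

Lemma long_path (f : rel 'I_n) (S : {set 'I_n}) :
  symmetric f -> irreflexive f -> acyclic_graph f ->
  (forall u w, f u w -> u \in S) ->
  (forall v, v \in S -> 2 <= deg f v) ->
  forall x, x \in S -> forall k, exists y rest,
    [/\ uniq (y :: rest), size rest = k, path f y rest & y \in S].
Proof.
move=> fs fi fa supp d2 x xS; elim=> [|k [y [rest [U Sz P yS]]]].
  by exists x, [::].
have dy := d2 _ yS.
set N := [set u | f y u].
set h := head y rest.
have : 0 < #|N :\ h|.
  move: dy; rewrite /deg -/N (cardsD1 h N); case: (h \in N) => /=; lia.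
case/card_gt0P => z; rewrite !inE => /andP [zh fyz].
case zs: (z \in y :: rest).
  exfalso.
  move: zs; rewrite inE; case/orP.
    by move/eqP => zy; move: fyz; rewrite zy fi.
  move=> zr; move: U P zh; rewrite /h; case/splitPr: zr => p1 p2.
  case: p1 => [|a p1]; first by rewrite /= eqxx.
  move=> U P _.
  have Us : uniq (y :: rcons (a :: p1) z).
    apply: subseq_uniq U; rewrite -cats1 -!cat_cons.
    by apply: cat_subseq; [exact: subseq_refl | rewrite sub1seq mem_head].
  have Sz3 : 2 < size (y :: rcons (a :: p1) z) by rewrite /= size_rcons.
  move/negP: (fa _ Us Sz3); apply.
  rewrite /cycle rcons_path; apply/andP; split; last by rewrite last_rcons fs.
  rewrite rcons_path; move: P; rewrite cat_path /= => /andP [-> /andP [-> _]] //.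
exists z, (y :: rest); split.
- by rewrite cons_uniq zs U.
- by rewrite /= Sz.
- by rewrite /= fs fyz P.
- by apply: (supp z y); rewrite fs.
Qed.

Lemma leaf_exists (f : rel 'I_n) (S : {set 'I_n}) :
  symmetric f -> irreflexive f -> acyclic_graph f ->
  (forall u w, f u w -> u \in S) ->
  forall x, x \in S -> exists2 v, v \in S & deg f v <= 1.
Proof.
move=> fs fi fa supp x xS.
case: (boolP [exists v in S, deg f v <= 1]) => [/exists_inP[v vS dv] | /exists_inPn H].
  by exists v.
have d2 : forall v, v \in S -> 2 <= deg f v by move=> v /H; rewrite ltnNge.
have [y [rest [U Sz _ _]]] := long_path fs fi fa supp d2 xS n.
move/card_uniqP: U; have := max_card (mem (y :: rest)); rewrite card_ord => le E.
by move: le; rewrite E /= Sz ltnn.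
Qed.

Definition rmv (f : rel 'I_n) v : rel 'I_n := [rel u w | [&& f u w, u != v & w != v]].

Lemma sum_rmv (f : rel 'I_n) v : symmetric f -> irreflexive f ->
  \sum_(u < n) deg f u = \sum_(u < n) deg (rmv f v) u + 2 * deg f v.
Proof.
move=> fs fi.
have d0 : deg (rmv f v) v = 0.
  apply/eqP; rewrite cards_eq0; apply/eqP/setP => w; rewrite !inE /=.
  by rewrite /rmv /= eqxx andbF.
have dd : forall u, u != v -> deg f u = f u v + deg (rmv f v) u.
  move=> u uv; rewrite /deg (cardsD1 v) inE; congr (_ + _); apply: eq_card => w.
  rewrite !inE /rmv /= uv; by case: (w != v); case: (f u w).
have sv : \sum_(u < n | u != v) (f u v : nat) = deg f v.
  rewrite /deg -sum1_card big_mkcond [in RHS]big_mkcond /=.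
  apply: eq_bigr => u _; rewrite inE fs.
  case: (boolP (u == v)) => [/eqP->|uv]; first by rewrite fi.
  by case: (f u v).
rewrite (bigD1 v) //= [in RHS](bigD1 v) //= d0 add0n.
rewrite (eq_bigr (fun u => f u v + deg (rmv f v) u)); last by move=> u /dd.
rewrite big_split /= sv; lia.
Qed.

Lemma edge_bound k : forall (f : rel 'I_n) (S : {set 'I_n}), #|S| = k ->
  symmetric f -> irreflexive f -> acyclic_graph f ->
  (forall u w, f u w -> u \in S) ->
  \sum_(u < n) deg f u <= 2 * (k - 1).
Proof.
elim: k => [|k IH] f S cS fs fi fa supp.
  rewrite big1 // => u _; apply/eqP; rewrite cards_eq0; apply/eqP/setP => w.
  rewrite !inE; apply/negbTE/negP => /supp; by rewrite (cards0_eq cS) inE.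
have [x xS] : exists x, x \in S by apply/card_gt0P; rewrite cS.
have [v vS dv] := leaf_exists fs fi fa supp xS.
have cS' : #|S :\ v| = k by move: cS; rewrite (cardsD1 v) vS add1n => -[].
have gs : symmetric (rmv f v).
  by move=> u w; rewrite /rmv /= fs; case: (u != v); case: (w != v); rewrite ?andbF.
have gi : irreflexive (rmv f v) by move=> u; rewrite /rmv /= fi.
have ga : acyclic_graph (rmv f v).
  move=> s Us Ss; apply/negP => C; have := fa s Us Ss; apply/negP/negPn.
  by apply: (sub_cycle _ C) => u w /and3P[].
have gsupp : forall u w, rmv f v u w -> u \in S :\ v.
  by move=> u w /and3P [fuw uv _]; rewrite in_setD1 uv (supp _ _ fuw).
have := IH _ _ cS' gs gi ga gsupp.
rewrite (sum_rmv v fs fi).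
have kpos : 0 < deg f v -> 0 < k.
  case/card_gt0P => w; rewrite inE => fvw.
  rewrite -cS'; apply/card_gt0P; exists w; rewrite in_setD1 (supp w v) ?andbT; last by rewrite fs.
  by apply/negP => /eqP wv; move: fvw; rewrite wv fi.
lia.
Qed.
End G.

Lemma card_sum n (P : pred 'I_n) : #|[set v | P v]| = \sum_(v < n) (P v : nat).
Proof.
rewrite -sum1_card big_mkcond; apply: eq_bigr => v _; rewrite inE; by case: (P v).
Qed.

Lemma sum_one n : \sum_(v < n) 1 = n.
Proof. by rewrite big_const_ord iter_addn_0 mul1n. Qed.

Lemma deg_pos n (e : rel 'I_n) : 1 < n -> connected_graph e -> forall v, 0 < deg e v.
Proof.
move=> n2 ce v.
have : 0 < #|[set: 'I_n] :\ v|.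
  have h := cardsD1 v [set: 'I_n]; rewrite cardsT card_ord in_setT add1n in h; by rewrite -ltnS -h.
case/card_gt0P => u; rewrite in_setD1 in_setT andbT => uv.
case/connectP: (ce v u) => [[|a p]] /=; first by move=> _ uv'; rewrite uv' eqxx in uv.
case/andP => eva _ _; apply/card_gt0P; exists a; by rewrite inE.
Qed.

Lemma pw (x : nat) : x <= 4 ->
  [/\ 1 = (x == 0) + (x == 1) + (x == 2) + (x == 3) + (x == 4),
      x = (x == 1) + 2 * (x == 2) + 3 * (x == 3) + 4 * (x == 4),
      x ^ 2 = (x == 1) + 4 * (x == 2) + 9 * (x == 3) + 16 * (x == 4)
    & (2 < x : nat) = (x == 3) + (x == 4)].
Proof. by case: x => [|[|[|[|[|]]]]]. Qed.

Theorem theorem3 (n b : nat) (e : rel 'I_n) :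
  chemical_tree e -> n_branching e = b ->
  1 <= b -> 2 * b + 2 < n ->
  (3 * b + 2 < n ->
     M1 e <= 2 * (2 * n + 3 * b - 3) /\
     (M1 e = 2 * (2 * n + 3 * b - 3) <->
        [/\ n_deg e 4 = b, n_deg e 2 = n - 3 * b - 2 & n_deg e 1 = 2 * b + 2]))
  /\
  (n <= 3 * b + 2 ->
     M1 e <= 2 * (4 * n - 3 * b - 7) /\
     (M1 e = 2 * (4 * n - 3 * b - 7) <->
        [/\ n_deg e 4 = n - 2 * b - 2, n_deg e 3 = 3 * b + 2 - n & n_deg e 1 = n - b])).
Proof.
move=> [[[fs fi] [ce fa]] d4] <- b1 nb.
have D : \sum_(u < n) deg e u <= 2 * (n - 1).
  apply: (@edge_bound n n e setT) => //; first by rewrite cardsT card_ord.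
  by move=> u w _; exact: in_setT.
have c0 : \sum_(v < n) (deg e v == 0 : nat) = 0.
  have n2 : 1 < n by lia.
  by apply: big1 => v _; rewrite eqn0Ngt (deg_pos n2 ce v).
have E1 : n = \sum_(v < n) (deg e v == 0 : nat) + \sum_(v < n) (deg e v == 1 : nat)
   + \sum_(v < n) (deg e v == 2 : nat) + \sum_(v < n) (deg e v == 3 : nat)
   + \sum_(v < n) (deg e v == 4 : nat).
  rewrite -!big_split -[LHS]sum_one; apply: eq_bigr => v _; by case: (pw (d4 v)).
have E2 : \sum_(v < n) deg e v = \sum_(v < n) (deg e v == 1 : nat)
   + 2 * \sum_(v < n) (deg e v == 2 : nat) + 3 * \sum_(v < n) (deg e v == 3 : nat)
   + 4 * \sum_(v < n) (deg e v == 4 : nat).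
  rewrite !big_distrr -!big_split; apply: eq_bigr => v _; by case: (pw (d4 v)).
have E3 : M1 e = \sum_(v < n) (deg e v == 1 : nat)
   + 4 * \sum_(v < n) (deg e v == 2 : nat) + 9 * \sum_(v < n) (deg e v == 3 : nat)
   + 16 * \sum_(v < n) (deg e v == 4 : nat).
  rewrite /M1 !big_distrr -!big_split; apply: eq_bigr => v _; by case: (pw (d4 v)).
have E4 : n_branching e = \sum_(v < n) (deg e v == 3 : nat) + \sum_(v < n) (deg e v == 4 : nat).
  rewrite /n_branching card_sum -big_split; apply: eq_bigr => v _; by case: (pw (d4 v)).
rewrite /n_deg !card_sum E3 E4.
rewrite E4 in b1 nb.
move: c0 E1 E2 D b1 nb.
set c0 := \sum_(v < n) _; set c1 := \sum_(v < n) _; set c2 := \sum_(v < n) _.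
set c3 := \sum_(v < n) _; set c4 := \sum_(v < n) _. set DD := \sum_(v < n) _.
move=> *; split=> H; (split; [lia | split; [move=> Eq; split; lia | case=> *; lia]]).
Qed.
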